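(* Let $K\subseteq\mathbb{R}^{n}$ be compact and let $T\subseteq\mathbb{R}^{n}$ be compact with non-empty interior. Then \[ M^{*}(K,T)\le N^{*}(K,-T)\quad\text{and}\quad\overline{M}_{\omega}(K,T)\le\overline{N}_{\omega}(K,-T). \] In particular, $M_{\omega}(K,T)\le N_{\omega}(K,-T)$.
   Context: $\mathbbm{1}_A$ is the indicator of $A$. $\mathcal{D}_{+}^{n}$ is the set of non-negative finite discrete measures on $\mathbb{R}^n$ (finite sums $\sum_i\omega_i\delta_{x_i}$, $\omega_i\ge0$) and $\mathcal{B}_{+}^{n}$ the non-negative regular Borel measures on $\mathbb{R}^n$; $(\nu*\mathbbm{1}_T)(x)=\int\mathbbm{1}_T(x-y)\,d\nu(y)$. Definitions: $N_\omega(K,T)=\inf\{\nu(\mathbb{R}^n):\nu\in\mathcal{D}_+^n,\ \nu*\mathbbm{1}_T\ge\mathbbm{1}_K\}$; $\overline{N}_\omega(K,T)=\inf\{\nu(\mathbb{R}^n):\nu\in\mathcal{D}_+^n,\ \mathrm{supp}(\nu)\subseteq K,\ \nu*\mathbbm{1}_T\ge\mathbbm{1}_K\}$; $N^{*}(K,T)=\inf\{\mu(\mathbb{R}^n):\mu\in\mathcal{B}_+^n,\ \mu*\mathbbm{1}_T\ge\mathbbm{1}_K\}$; $M_\omega(K,T)=\sup\{\nu(K):\nu\in\mathcal{D}_+^n,\ \nu*\mathbbm{1}_T\le1\text{ on }\mathbb{R}^n\}$; $\overline{M}_\omega(K,T)=\sup\{\nu(K):\nu\in\mathcal{D}_+^n,\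 (\nu*\mathbbm{1}_T)(x)\le1\ \forall x\in K\}$; $M^{*}(K,T)=\sup\{\mu(K):\mu\in\mathcal{B}_+^n,\ \mu*\mathbbm{1}_T\le1\text{ on }\mathbb{R}^n\}$. *)

(* Defs.v *)
From HB Require Import structures.
From mathcomp Require Import all_boot all_order all_algebra.
From mathcomp Require Import all_classical all_reals all_analysis.
Set Implicit Arguments. Unset Strict Implicit. Unset Printing Implicit Defensive.
Import Order.TTheory GRing.Theory Num.Theory.
Import numFieldNormedType.Exports.
Local Open Scope classical_set_scope.
Local Open Scope ring_scope.

(* R^n is modelled as row vectors 'rV[R]_n with their canonical normed topology. *)
Definition borelRn (R : realType) (n : nat) := g_sigma_algebraType (@open 'rV[R]_n).

Section Defs.
Variables (R : realType) (n : nat).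
Local Notation V := 'rV[R]_n.

Definition setNr (T : set V) : set V := [set - t | t in T].

Definition regular_measure (mu : {measure set (borelRn R n) -> \bar R}) : Prop :=
  forall A : set (borelRn R n), measurable A ->
    mu A = ereal_inf [set mu U | U in [set U : set V | open U /\ A `<=` U]] /\
    mu A = ereal_sup [set mu C | C in [set C : set V | compact C /\ C `<=` A]].

Definition bconv (mu : {measure set (borelRn R n) -> \bar R}) (T : set V) (x : V) : \bar R :=
  (\int[mu]_(y in [set: borelRn R n]) (\1_T (x - (y : V)) : R)%:E)%E.

(* ---------- finite discrete measures: sum_i w_i delta_{x_i}, w_i >= 0 ---------- *)
Definition discr := seq (R * V).
Definition dnonneg (s : discr) : Prop := forall p, p \in s -> 0 <= p.1.
Definition dmass (s : discr) : R := \sum_(p <- s) p.1.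
Definition dmass_on (s : discr) (A : set V) : R := \sum_(p <- s | `[< A p.2 >]) p.1.
Definition dconv (s : discr) (T : set V) (x : V) : R := \sum_(p <- s) p.1 * \1_T (x - p.2).
Definition dsupp_sub (s : discr) (A : set V) : Prop := forall p, p \in s -> 0 < p.1 -> A p.2.

Local Open Scope ereal_scope.

Definition N_omega (K T : set V) : \bar R :=
  ereal_inf [set (dmass s)%:E | s in
    [set s : discr | dnonneg s /\ forall x, ((\1_K x : R) <= dconv s T x)%R]].

Definition N_omega_bar (K T : set V) : \bar R :=
  ereal_inf [set (dmass s)%:E | s in
    [set s : discr | dnonneg s /\ dsupp_sub s K /\ forall x, ((\1_K x : R) <= dconv s T x)%R]].

Definition N_star (K T : set V) : \bar R :=
  ereal_inf [set mu [set: borelRn R n] | mu in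
    [set mu : {measure set (borelRn R n) -> \bar R} |
      regular_measure mu /\ forall x, (\1_K x : R)%:E <= bconv mu T x]].

Definition M_omega (K T : set V) : \bar R :=
  ereal_sup [set (dmass_on s K)%:E | s in
    [set s : discr | dnonneg s /\ forall x, (dconv s T x <= 1)%R]].

Definition M_omega_bar (K T : set V) : \bar R :=
  ereal_sup [set (dmass_on s K)%:E | s in
    [set s : discr | dnonneg s /\ forall x, K x -> (dconv s T x <= 1)%R]].

Definition M_star (K T : set V) : \bar R :=
  ereal_sup [set mu K | mu in
    [set mu : {measure set (borelRn R n) -> \bar R} |
      regular_measure mu /\ forall x, bconv mu T x <= 1%:E]].

End Defs.

(* Main.v *)
Require Import Defs.
From HB Require Import structures.
From mathcomp Require Import all_boot all_order all_algebra.
From mathcomp Require Import all_classical all_reals all_analysis.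
From mathcomp Require Import finmap measurable_realfun.
Import Order.TTheory GRing.Theory Num.Theory.
Import numFieldNormedType.Exports.
Local Open Scope classical_set_scope.
Local Open Scope ring_scope.

Section Disc.
Variables (R : realType) (n : nat).
Local Notation V := 'rV[R]_n.

Lemma indic_setNr (T : set V) (a b : V) :
  \1_(setNr T) (a - b) = \1_T (b - a) :> R.
Proof.
rewrite !indicE.
have E : (a - b \in setNr T) = (b - a \in T).
  apply/idP/idP.
    move=> /set_mem [t Tt] e; apply/mem_set.
    have -> : b - a = t by rewrite -opprB -e opprK.
    exact: Tt.
  move=> /set_mem Tt; apply/mem_set; exists (b - a) => //.
  by rewrite opprB.
by rewrite E.
Qed.

Lemma indic_ge0' (A : set V) x : 0 <= \1_A x :> R.
Proof. by rewrite indicE. Qed.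

Lemma indic_le1' (A : set V) x : \1_A x <= 1 :> R.
Proof. by rewrite indicE; case: (x \in A). Qed.

Lemma dconv_ge0 (s : discr R n) T x : dnonneg s -> 0 <= dconv s T x.
Proof.
move=> s0; rewrite /dconv big_seq; apply: sumr_ge0 => p ps.
by rewrite mulr_ge0 ?s0 ?indic_ge0'.
Qed.

Lemma disc_key (s s' : discr R n) (K T : set V) :
  dnonneg s -> dnonneg s' ->
  (forall x, K x -> 1 <= dconv s' (setNr T) x) ->
  (forall q, q \in s' -> 0 < q.1 -> dconv s T q.2 <= 1) ->
  dmass_on s K <= dmass s'.
Proof.
move=> s0 s'0 HN HM.
apply: (@le_trans _ _ (\sum_(p <- s) p.1 * dconv s' (setNr T) p.2)).
  rewrite /dmass_on [X in _ <= X](bigID (fun p => `[< K p.2 >])) /=.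
  rewrite -[X in X <= _]addr0; apply: lerD.
    rewrite big_seq_cond [X in _ <= X]big_seq_cond.
    apply: ler_sum => p /andP[ps /asboolP Kp].
    have a := s0 p ps; have b := HN _ Kp.
    by rewrite -[X in X <= _]mulr1 (ler_wpM2l a b).
  rewrite big_seq_cond; apply: sumr_ge0 => p /andP[ps _].
  exact: mulr_ge0 (s0 p ps) (dconv_ge0 _ _ _ s'0).
rewrite /dconv.
under eq_bigr => p _ do rewrite big_distrr /=.
rewrite exchange_big /= /dmass big_seq [X in _ <= X]big_seq.
apply: ler_sum => q qs.
have -> : \sum_(i <- s) i.1 * (q.1 * \1_(setNr T) (i.2 - q.2)) =
   q.1 * \sum_(i <- s) i.1 * \1_T (q.2 - i.2).
  rewrite big_distrr; apply: eq_bigr => p _.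
  by rewrite indic_setNr mulrCA.
have [q0|] := ltP 0 q.1.
  by rewrite -[X in _ <= X]mulr1 ler_wpM2l ?s'0 // HM.
move=> q0; have -> : q.1 = 0 by apply/eqP; rewrite eq_le q0 s'0.
by rewrite mul0r.
Qed.

End Disc.

Set Implicit Arguments. Unset Strict Implicit. Unset Printing Implicit Defensive.

Section Meas.
Variables (R : realType) (n : nat).
Local Notation V := 'rV[R]_n.
Local Notation B := (borelRn R n).

Lemma open_mB (A : set V) : open A -> measurable (A : set B).
Proof. by move=> oA; apply: sub_sigma_algebra. Qed.

Lemma closed_mB (A : set V) : closed A -> measurable (A : set B).
Proof.
move=> cA; rewrite -[A]setCK; apply: measurableC; apply: open_mB.
by rewrite openC.
Qed.

Lemma coord_mB (i : 'I_1) (j : 'I_n) :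
  measurable_fun [set: B] (fun v : B => (v : V) i j).
Proof.
apply: (measurability _ (measurable_realfun.RGenOpens.measurableE R)).
move=> _ [_ [a [b ->] <-]]; rewrite setTI; apply: open_mB.
have : continuous (fun v : V => v i j).
  move=> v; exact: coord_continuous.
move/continuousP; apply; exact: interval_open.
Qed.

End Meas.

Section Meas2.
Variables (R : realType) (n : nat).
Local Notation V := 'rV[R]_n.
Local Notation B := (borelRn R n).

Lemma normV_lt (w : V) e : 0 < e -> (`|w| < e) = [forall ij, `|w ij.1 ij.2| < e].
Proof.
move=> e0; rewrite (_ : `|w| = mx_norm w) // mx_normrE; apply/bigmax_ltP/forallP.
  by move=> [_ H] ij; exact: H.
by move=> H; split => // ij _; exact: H.
Qed.

Lemma mB_ltnorm (t : V) e : 0 < e ->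
  measurable [set z : (B * B)%type | `|(z.2 : V) - (z.1 : V) - t| < e].
Proof.
move=> e0.
have -> : [set z : (B * B)%type | `|(z.2 : V) - (z.1 : V) - t| < e] =
  \bigcap_(ij in [set: 'I_1 * 'I_n])
     [set z : (B * B)%type | `|(z.2 : V) ij.1 ij.2 - (z.1 : V) ij.1 ij.2 - t ij.1 ij.2| < e].
  apply/seteqP; split => z /=.
    by rewrite normV_lt // => /forallP H ij _; have := H ij; rewrite !mxE.
  by move=> H; rewrite normV_lt //; apply/forallP => ij; rewrite !mxE; exact: H.
apply: fin_bigcap_measurable; first exact: finite_finset.
move=> [i j] _.
have mg : measurable_fun [set: (B * B)%type]
   (fun z : (B * B)%type => (z.2 : V) i j - (z.1 : V) i j - t i j).
  apply: measurable_realfun.measurable_funB => //.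
  apply: measurable_realfun.measurable_funB.
    exact: (measurableT_comp (@coord_mB R n i j) (@measurable_snd _ _ B B)).
  exact: (measurableT_comp (@coord_mB R n i j) (@measurable_fst _ _ B B)).
have := mg measurableT `]-e, e[%classic (measurable_itv _).
rewrite setTI; congr measurable; apply/seteqP; split => z /=;
  by rewrite in_itv /= ltr_norml.
Qed.

End Meas2.

Section Meas3.
Variables (R : realType) (n : nat).
Local Notation V := 'rV[R]_n.
Local Notation B := (borelRn R n).

Lemma hausV : hausdorff_space V.
Proof. exact: norm_hausdorff. Qed.

Lemma netP (T : set V) e : compact T -> 0 < e ->
  exists F : {fset V}, [set` F] `<=` T /\ T `<=` \bigcup_(t in [set` F]) ball t e.
Proof.
move=> cT e0; move: cT; rewrite compact_cover => /(_ V T (fun t => ball t e)).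
case.
- by move=> t _; exact: ball_open.
- by move=> t Tt; exists t => //; exact: ballxx.
move=> F FT cov; exists F; split => // t /= tF; apply/set_mem/FT; exact: tF.
Qed.

Lemma closed_seq (T : set V) (w : V) : closed T ->
  (forall k : nat, exists2 t, T t & `|w - t| < k.+1%:R^-1) -> T w.
Proof.
move=> cT H; rewrite (closure_id T).1 //; move=> B0 /nbhs_ballP [e /= e0 Be].
pose k := Num.Def.trunc e^-1.
have [t Tt wt] := H k.
exists t; split => //; apply: Be; rewrite -ball_normE /=.
apply: (lt_le_trans wt).
rewrite -[e]invrK lef_pV2 ?posrE ?invr_gt0 //.
exact/ltW/truncnS_gt.
Qed.

Lemma mD (T : set V) : compact T ->
  measurable [set z : (B * B)%type | T ((z.2 : V) - (z.1 : V))].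
Proof.
move=> cT.
have H k := @netP T (k.+1%:R^-1) cT (ltac:(by rewrite invr_gt0)).
pose F k := projT1 (cid (H k)).
have FT k : [set` F k] `<=` T /\ T `<=` \bigcup_(t in [set` F k]) ball t (k.+1%:R^-1).
  exact: (projT2 (cid (H k))).
have -> : [set z : (B * B)%type | T ((z.2 : V) - (z.1 : V))] =
  \bigcap_k \bigcup_(t in [set` F k])
     [set z : (B * B)%type | `|(z.2 : V) - (z.1 : V) - t| < k.+1%:R^-1].
  apply/seteqP; split => z /=.
    move=> Tz k _; have [_ /(_ _ Tz) [t tF]] := FT k.
    by rewrite -ball_normE /= distrC => ht; exists t.
  move=> Hz; apply: closed_seq; first exact: compact_closed hausV cT.
  move=> k; have [t tF ht] := Hz k I; exists t => //.
  by have [+ _] := FT k; apply.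
apply: bigcapT_measurable => k; apply: fin_bigcup_measurable.
  exact: finite_fset.
by move=> t _; apply: mB_ltnorm; rewrite invr_gt0.
Qed.

End Meas3.

Section FinRestr.
Variables (R : realType) (n : nat).
Local Notation B := (borelRn R n).
Variables (mu : {measure set B -> \bar R}) (A : set B) (mA : measurable A)
  (hA : (mu A < +oo)%E).

Definition fmrestr (_ : (mu A < +oo)%E) := mrestr mu mA.
Local Notation fmr := (fmrestr hA).
HB.instance Definition _ := Measure.on fmr.

Lemma fmrestr_fin : fin_num_fun fmr.
Proof.
move=> X mX; rewrite ge0_fin_numE ?measure_ge0 //.
apply: le_lt_trans hA; rewrite /fmrestr /mrestr.
apply: le_measure => //.
  by apply: mem_set; apply: measurableI.
by apply: mem_set.
Qed.

HB.instance Definition _ := @Measure_isFinite.Build _ B _ fmr fmrestr_fin.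

Lemma fmrestrE X : fmr X = mu (X `&` A).
Proof. by []. Qed.
End FinRestr.

Section FinMeas.
Variables (R : realType) (n : nat).
Local Notation B := (borelRn R n).
Variables (mu : {measure set B -> \bar R}) (hT : (mu setT < +oo)%E).

Definition fmeas (_ : (mu setT < +oo)%E) := (mu : set B -> \bar R).
Local Notation fm := (fmeas hT).
HB.instance Definition _ := Measure.on fm.

Lemma fmeas_fin : fin_num_fun fm.
Proof.
move=> X mX; rewrite ge0_fin_numE ?measure_ge0 //.
apply: le_lt_trans hT; rewrite /fmeas.
by apply: le_measure => //; apply/mem_set.
Qed.

HB.instance Definition _ := @Measure_isFinite.Build _ B _ fm fmeas_fin.
End FinMeas.



Section Key.
Variables (R : realType) (n : nat).
Local Notation V := 'rV[R]_n.
Local Notation B := (borelRn R n).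

Lemma closed_sect (T : set V) (y : V) : closed T -> closed [set x : V | T (y - x)].
Proof.
move=> cT.
have -> : [set x : V | T (y - x)] = (fun x => y - x) @^-1` T by [].
have cf : continuous (fun x : V => y - x).
  move=> x.
  have h1 : {for x, continuous (fun=> y : V)} by exact: cst_continuous.
  have h2 : {for x, continuous (@id V)} by [].
  exact: (continuousB h1 h2).
exact: (proj1 (continuous_closedP _) cf _ cT).
Qed.

Lemma bconvE (mu : {measure set B -> \bar R}) (T : set V) y : closed T ->
  bconv mu T y = mu [set x : B | T (y - (x : V))].
Proof.
move=> cT; rewrite /bconv.
have mS : measurable ([set x : V | T (y - x)] : set B).
  by apply: closed_mB; apply: closed_sect.
rewrite -[X in _ = mu X]setIT -integral_indic //; apply: eq_integral => x _.
Qed.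

End Key.

Section Fin.
Variables (R : realType) (n : nat).
Local Notation V := 'rV[R]_n.
Local Notation B := (borelRn R n).

Lemma le_mB (mu : {measure set B -> \bar R}) (A C : set B) :
  measurable A -> measurable C -> A `<=` C -> (mu A <= mu C)%E.
Proof. by move=> mA mC AC; apply: le_measure => //; apply/mem_set. Qed.

Lemma ball_mB (c : V) r : measurable (ball c r : set B).
Proof. by apply: open_mB; exact: ball_open. Qed.

Lemma union_balls_le (mu : {measure set B -> \bar R}) r (s : seq V) :
  (forall c, (mu (ball c r) <= 1)%E) ->
  (mu (\big[setU/set0]_(c <- s) (ball c r : set B)) <= (size s)%:R%:E)%E.
Proof.
move=> H; elim: s => [|c s IH]; first by rewrite big_nil measure0.
rewrite big_cons /=.
apply: (le_trans (measureU2 _ _ _)).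
- exact: ball_mB.
- by apply: bigsetU_measurable => i _; exact: ball_mB.
have -> : ((size (c :: s))%:R%:E = 1 + (size s)%:R%:E :> \bar R)%E.
  by rewrite /= -EFinD mulrSr addrC.
exact: (leeD (H c) IH).
Qed.

Lemma muK_fin (mu : {measure set B -> \bar R}) (K T : set V) :
  compact K -> closed T -> interior T !=set0 ->
  (forall y, (bconv mu T y <= 1)%E) -> (mu K < +oo)%E.
Proof.
move=> cK cT [t0 /nbhs_ballP [r /= r0 rT]] Hb.
have Hball c : (mu (ball c r) <= 1)%E.
  apply: le_trans (Hb (c + t0)); rewrite bconvE //.
  apply: le_mB; first exact: ball_mB.
    by apply: closed_mB; apply: closed_sect.
  move=> x /= bx; apply: rT; move: bx; rewrite -!ball_normE /=.
  by rewrite (_ : t0 - (c + t0 - x) = - (c - x)) ?normrN // addrAC opprD addrCA subrr addr0.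
have cK' := cK.
move: cK; rewrite compact_cover => /(_ V K (fun c => ball c r)).
case.
- by move=> c _; exact: ball_open.
- by move=> c Kc; exists c => //; exact: ballxx.
move=> F _ cov.
have mK : measurable (K : set B).
  by apply: closed_mB; exact: compact_closed (@hausV R n) cK'.
have mU : measurable (\big[setU/set0]_(c <- (F : seq V)) (ball c r : set B)).
  by apply: bigsetU_measurable => i _; exact: ball_mB.
apply: (le_lt_trans (le_mB mu mK mU _)).
  by rewrite -bigcup_seq; exact: cov.
have h := union_balls_le (F : seq V) Hball.
exact: (le_lt_trans h (ltry _)).
Qed.

End Fin.

Section Main.
Variables (R : realType) (n : nat).
Local Notation V := 'rV[R]_n.
Local Notation B := (borelRn R n).

Lemma meas_key (K T : set V) (mu mu' : {measure set B -> \bar R}) :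
  compact K -> compact T -> interior T !=set0 ->
  (forall y, (bconv mu T y <= 1)%E) ->
  (forall x, ((\1_K x : R)%:E <= bconv mu' (setNr T) x)%E) ->
  (mu K <= mu' setT)%E.
Proof.
move=> cK cT iT HM HN.
have clT : closed T by exact: compact_closed (@hausV R n) cT.
have mK : measurable (K : set B).
  by apply: closed_mB; exact: compact_closed (@hausV R n) cK.
have [oo|fin] := leP +oo%E (mu' setT).
  by apply: (le_trans (leey _)).
have muK := muK_fin cK clT iT HM.
pose m1 := fmrestr mK muK.
pose m2 := fmeas fin.
pose D := [set z : (B * B)%type | T ((z.2 : V) - (z.1 : V))].
have mD : measurable D by exact: mD.
pose f := fun z : (B * B)%type => ((\1_D z : R)%:E).
have mf : measurable_fun [set: (B * B)%type] f.
  by apply/measurable_EFinP; exact: measurable_indic.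
have f0 z : (0 <= f z)%E by rewrite lee_fin indicE.
have E := fubini_tonelli (m1:=m1) (m2:=m2) f mf f0.
have mS y : measurable ([set x : V | T (y - x)] : set B).
  by apply: closed_mB; apply: closed_sect.
have -> : mu K = (\int[m1]_x (\1_K x : R)%:E)%E.
  by rewrite integral_indic // /m1 /= /fmrestr /mrestr setIT setIid.
apply: (@le_trans _ _ (\int[m1]_x \int[m2]_y f (x, y))%E).
  apply: ge0_le_integral => //.
  - by apply/measurable_EFinP; exact: measurable_indic.
  - exact: (measurable_fun_fubini_tonelli_F f mf f0).
  move=> x _; apply: (le_trans (HN x)); rewrite /bconv.
  rewrite le_eqVlt; apply/orP; left; apply/eqP; apply: eq_integral => y _.
  by rewrite indic_setNr.
rewrite E.
apply: (@le_trans _ _ (\int[m2]_y (cst 1%E y))%E); last first.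
  by rewrite integral_cst // mul1e.
apply: ge0_le_integral => //.
- by move=> y _; apply: integral_ge0 => x _; exact: f0.
- exact: (measurable_fun_fubini_tonelli_G f mf f0).
move=> y _; apply: (le_trans _ (HM y)).
rewrite bconvE //.
have -> : (\int[m1]_x f (x, y))%E = (\int[m1]_x (\1_([set x : V | T (y - x)] : set B) x : R)%:E)%E.
  by [].
rewrite integral_indic // /m1 /= /fmrestr /mrestr setIT.
apply: le_mB => //; try (by apply: measurableI); try (by apply: subIsetl).
Qed.

End Main.

Unset Implicit Arguments.

Theorem proposition2p1 (R : realType) (n : nat) (K T : set 'rV[R]_n) :
  compact K -> compact T -> interior T !=set0 ->
  [/\ (M_star K T <= N_star K (setNr T))%E,
      (M_omega_bar K T <= N_omega_bar K (setNr T))%E &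
      (M_omega K T <= N_omega K (setNr T))%E].
Proof.
move=> cK cT iT; split.
- apply/ereal_supP => _ [mu [_ HM] <-]; apply/ereal_infP => _ [mu' [_ HN] <-].
  exact: meas_key cK cT iT HM HN.
- apply/ereal_supP => _ [s [s0 HM] <-]; apply/ereal_infP => _ [s' [s'0 [sup HN]] <-].
  rewrite lee_fin; apply: (@disc_key R n s s' K T) => //.
    by move=> x Kx; have := HN x; rewrite indicE (mem_set Kx) mulr1n.
  by move=> q qs q0; apply: HM; exact: sup q qs q0.
- apply/ereal_supP => _ [s [s0 HM] <-]; apply/ereal_infP => _ [s' [s'0 HN] <-].
  rewrite lee_fin; apply: (@disc_key R n s s' K T) => //.
  by move=> x Kx; have := HN x; rewrite indicE (mem_set Kx) mulr1n.
Qed.
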